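(* Let $n\ge1$ be an integer. The following are equivalent: (a) $n\le3$; (b) for every $j\in\{1,\dots,n+2\}$, the function $\lambda\mapsto\lambda_{n,j}(\lambda)-1/n$ does not change sign on the interval $(1/n,\infty)$.
   Context: For an integer $n\ge1$ let $f_n(x)=(1+x)^{n+1}/x$ for $x>0$. The function $f_n$ is strictly decreasing on $(0,1/n]$ and strictly increasing on $[1/n,\infty)$. Regular graph exponents (Schmidt–Summerer), defined algebraically. For $\lambda\in[1/n,\infty)$ let $\mu\in(0,1/n]$ be the unique solution of $f_n(\mu)=f_n(\lambda)$, and set $$\lambda_{n,j}(\lambda)=\lambda^{1-\frac{j-1}{n+1}}\mu^{\frac{j-1}{n+1}},\qquad 1\le j\le n+2 .$$ All ratios $\lambda_{n,j}/\lambda_{n,j+1}$ are equal. These are the exponents $\lambda_{n,j}$ of the regular graph in dimension $n$ with parameter $\lambda_n=\lambda$. *)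

(* Defs.v *)
From Stdlib Require Import Reals Lra Lia ClassicalEpsilon.
Open Scope R_scope.

Definition f (n : nat) (x : R) : R := (1 + x) ^ (n + 1) / x.

(* mu_n(lambda): the unique mu in (0, 1/n] with f_n(mu) = f_n(lambda)
   (for lambda >= 1/n); chosen by Hilbert's epsilon, which returns that
   unique solution whenever it exists. *)
Definition mu (n : nat) (lam : R) : R :=
  epsilon (inhabits 0) (fun m => 0 < m <= 1 / INR n /\ f n m = f n lam).

Definition lambda_nj (n j : nat) (lam : R) : R :=
  let e := (INR j - 1) / (INR n + 1) in
  Rpower lam (1 - e) * Rpower (mu n lam) e.

Definition no_sign_change_on_ray (g : R -> R) (a : R) : Prop :=
  ~ (exists x y, a < x /\ a < y /\ g x < 0 /\ 0 < g y).

(* Main.v *)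
Require Import Defs.
From Stdlib Require Import Reals Lra Lia Psatz ClassicalEpsilon Arith.
Open Scope R_scope.

Lemma bern (s : R) (n : nat) : 1 <= s -> 1 + INR n * (s - 1) <= s ^ n.
Proof.
  intros Hs. induction n as [|n IH]. simpl; lra.
  rewrite S_INR. simpl.
  assert (0 <= INR n) by apply pos_INR.
  assert (0 <= (s - 1) * (s ^ n - (1 + INR n * (s - 1)))) by (apply Rmult_le_pos; lra).
  assert (0 <= INR n * ((s - 1) * (s - 1))) by (apply Rmult_le_pos; nra).
  nra.
Qed.

Lemma lemB (t : R) (m : nat) : 1 <= t -> t ^ (S m) - 1 <= INR (S m) * (t - 1) * t ^ m.
Proof.
  intros Ht. induction m as [|m IH]. simpl; lra.
  assert (H1 : 1 <= t ^ S m) by (apply pow_R1_Rle; lra).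
  replace (t ^ S (S m)) with (t * t ^ S m) by (simpl; ring).
  replace (t ^ S m) with (t * t ^ m) in IH |- * by (simpl; ring).
  rewrite S_INR.
  assert (0 <= t ^ m) by (apply pow_le; lra).
  assert (1 <= t * t ^ m) by (replace (t * t^m) with (t ^ S m) by (simpl; ring); apply pow_R1_Rle; lra).
  assert (0 <= INR m) by apply pos_INR.
  assert (0 <= (t - 1) * (INR (S m) * (t - 1) * t ^ m - (t * t ^ m - 1))) by (apply Rmult_le_pos; lra).
  rewrite S_INR in *. nra.
Qed.

Lemma pair (n : nat) (a b : R) : 0 < a -> a < b -> Defs.f n a = Defs.f n b ->
  1 < (1 + b) / (1 + a) /\ b = ((1 + b) / (1 + a)) ^ (n + 1) * a /\
  1 + b = ((1 + b) / (1 + a)) * (1 + a).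
Proof.
  intros Ha Hab Hf. unfold Defs.f in Hf.
  set (t := (1 + b) / (1 + a)).
  assert (Hb : 1 + b = t * (1 + a)) by (unfold t; field; lra).
  split; [| split; [| exact Hb]].
  - unfold t. apply (Rmult_lt_reg_r (1 + a)); [lra|]. field_simplify; lra.
  - rewrite Hb in Hf. rewrite Rpow_mult_distr in Hf.
    assert (Hp : 0 < (1 + a) ^ (n + 1)) by (apply pow_lt; lra).
    apply (Rmult_eq_reg_r ((1 + a) ^ (n + 1) / (a * b))).
    2: { apply Rgt_not_eq. apply Rlt_gt. apply Rdiv_lt_0_compat; nra. }
    transitivity ((1 + a) ^ (n + 1) / a). field; lra.
    rewrite Hf. field. lra.
Qed.

Lemma gt_inv (n : nat) (t a b : R) : (1 <= n)%nat -> 1 < t -> 0 < a ->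
  b = t ^ (n + 1) * a -> 1 + b = t * (1 + a) -> 1 / INR n < b.
Proof.
  intros Hn Ht Ha Hb Hb2.
  destruct n as [|m]; [lia|].
  set (Q := t ^ m) in *.
  assert (HP : t ^ S m = t * Q) by (unfold Q; simpl; ring).
  assert (HP1 : t ^ (S m + 1) = t * (t * Q)) by (rewrite <- HP, Nat.add_1_r; simpl; ring).
  rewrite HP1 in Hb.
  assert (HB := lemB t m (Rlt_le _ _ Ht)). rewrite HP in HB. fold Q in HB.
  assert (HQ : 1 <= Q) by (unfold Q; apply pow_R1_Rle; lra).
  assert (Hn0 : 0 < INR (S m)) by (apply lt_0_INR; lia).
  set (N := INR (S m)) in *.
  assert (Hid : a * t * (t * Q - 1) = t - 1) by nra.
  assert (HP0 : 0 < t * Q - 1) by nra.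
  apply (Rmult_lt_reg_l N); [lra|].
  replace (N * (1 / N)) with 1 by (field; lra).
  apply (Rmult_lt_reg_r (t * Q - 1)); [lra|].
  rewrite Hb.
  replace (N * (t * (t * Q) * a) * (t * Q - 1)) with (N * (t * Q) * (a * t * (t * Q - 1))) by ring.
  rewrite Hid. nra.
Qed.

Lemma uniq (n : nat) (a b : R) : (1 <= n)%nat -> 0 < a <= 1 / INR n -> 0 < b <= 1 / INR n ->
  Defs.f n a = Defs.f n b -> a = b.
Proof.
  intros Hn Ha Hb Hf.
  destruct (Rtotal_order a b) as [H|[H|H]]; auto.
  - destruct (pair n a b) as (H1 & H2 & H3); try lra.
    pose proof (gt_inv n _ a b Hn H1 (proj1 Ha) H2 H3). lra.
  - destruct (pair n b a) as (H1 & H2 & H3); try lra; auto.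
    pose proof (gt_inv n _ b a Hn H1 (proj1 Hb) H2 H3). lra.
Qed.

Lemma mu_eq (n : nat) (x y : R) : (1 <= n)%nat -> 0 < y <= 1 / INR n ->
  Defs.f n y = Defs.f n x -> mu n x = y.
Proof.
  intros Hn Hy Hf.
  assert (H : (fun m => 0 < m <= 1 / INR n /\ Defs.f n m = Defs.f n x) (mu n x)).
  { unfold mu. apply epsilon_spec. exists y. auto. }
  destruct H as [H1 H2]. apply (uniq n); auto. congruence.
Qed.

Lemma lam_eq (n j : nat) (x y t : R) : (1 <= j <= n + 2)%nat -> 0 < y -> 0 < t ->
  x = t ^ (n + 1) * y -> mu n x = y -> lambda_nj n j x = t ^ (n + 2 - j) * y.
Proof.
  intros Hj Hy Ht Hx Hmu. unfold lambda_nj. rewrite Hmu.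
  assert (Htp : 0 < t ^ (n + 1)) by (apply pow_lt; lra).
  assert (Htq : 0 < t ^ (n + 2 - j)) by (apply pow_lt; lra).
  unfold Rpower. rewrite <- exp_plus.
  rewrite <- (exp_ln (t ^ (n + 2 - j) * y)) by nra.
  f_equal. rewrite Hx. rewrite !ln_mult by lra. rewrite !ln_pow by lra.
  rewrite minus_INR by lia. rewrite !plus_INR. simpl (INR 2). simpl (INR 1).
  assert (0 <= INR n) by apply pos_INR.
  field. lra.
Qed.

Lemma param (n : nat) (s : R) : (1 <= n)%nat -> 1 < s ->
  let y := (s - 1) / (s ^ (n + 1) - s) in
  let x := s ^ (n + 1) * y in
  0 < y /\ 1 / INR n < x /\ mu n x = y.
Proof.
  intros Hn Hs y x.
  assert (HP : 1 < s ^ n) by (apply Rlt_pow_R1; [lra|lia]).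
  assert (HS : s ^ (n + 1) = s * s ^ n) by (rewrite Nat.add_1_r; simpl; ring).
  assert (HD : 0 < s ^ (n + 1) - s) by nra.
  assert (Hy : 0 < y) by (unfold y; apply Rdiv_lt_0_compat; lra).
  assert (Hid : y * (s ^ (n + 1) - s) = s - 1) by (unfold y; field; lra).
  assert (H1 : 1 + x = s * (1 + y)) by (unfold x; nra).
  assert (Hx : 1 / INR n < x) by (apply (gt_inv n s y x); auto).
  assert (Hn0 : 0 < INR n) by (apply lt_0_INR; lia).
  assert (Hyn : y <= 1 / INR n).
  { assert (HB := bern s n (Rlt_le _ _ Hs)).
    apply (Rmult_le_reg_l (INR n)); [lra|].
    replace (INR n * (1 / INR n)) with 1 by (field; lra).
    apply (Rmult_le_reg_r (s ^ (n + 1) - s)); [lra|].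
    rewrite Rmult_assoc, Hid. rewrite HS. nra. }
  split; [exact Hy|split; [exact Hx|]].
  apply mu_eq; auto.
  unfold Defs.f. rewrite H1. rewrite Rpow_mult_distr. unfold x.
  field. split; lra.
Qed.

Lemma exist_mu (n : nat) (x : R) : (1 <= n)%nat -> 1 / INR n < x ->
  INR n * (1 + 1 / INR n) ^ (n + 1) <= Defs.f n x ->
  exists y, 0 < y <= 1 / INR n /\ Defs.f n y = Defs.f n x.
Proof.
  intros Hn Hx Hmin.
  assert (Hn0 : 0 < INR n) by (apply lt_0_INR; lia).
  assert (Hx0 : 0 < x) by (assert (0 < 1 / INR n) by (apply Rdiv_lt_0_compat; lra); lra).
  set (F := Defs.f n x) in *.
  assert (Hc : 1 < (1 + 1 / INR n) ^ (n + 1)).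
  { apply Rlt_pow_R1; [|lia]. assert (0 < 1 / INR n) by (apply Rdiv_lt_0_compat; lra); lra. }
  assert (HF : INR n < F) by nra.
  destruct (Req_dec F (INR n * (1 + 1 / INR n) ^ (n + 1))) as [Heq|Hne].
  - exists (1 / INR n). split. split; [apply Rdiv_lt_0_compat; lra| lra].
    rewrite Heq. unfold Defs.f. field. lra.
  - set (h := fun z => F * z - (1 + z) ^ (n + 1)).
    assert (Hcont : continuity h).
    { unfold h. apply continuity_minus.
      - apply continuity_scal. apply derivable_continuous, derivable_id.
      - apply (continuity_comp (fun z => 1 + z) (fun z => z ^ (n + 1))).
        + apply continuity_plus. apply continuity_const. intros a b; reflexivity.
          apply derivable_continuous, derivable_id.
        + apply derivable_continuous, derivable_pow. }
    assert (HF0 : 0 < F) by lra.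
    assert (Heps : 1 / F < 1 / INR n) by (apply Rmult_lt_reg_r with (F * INR n); [nra|]; field_simplify; lra).
    assert (He0 : 0 < 1 / F) by (apply Rdiv_lt_0_compat; lra).
    destruct (IVT h (1 / F) (1 / INR n) Hcont Heps) as [z [Hz Hhz]].
    + unfold h. replace (F * (1 / F)) with 1 by (field; lra).
      assert (1 < (1 + 1 / F) ^ (n + 1)) by (apply Rlt_pow_R1; [lra|lia]). lra.
    + unfold h. apply (Rmult_lt_reg_l (INR n)); [lra|]. rewrite Rmult_0_r.
      replace (INR n * (F * (1 / INR n) - (1 + 1 / INR n) ^ (n + 1)))
        with (F - INR n * (1 + 1 / INR n) ^ (n + 1)) by (field; lra). lra.
    + exists z. split; [lra|]. unfold h in Hhz. unfold Defs.f. fold F.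
      apply (Rmult_eq_reg_r z); [|lra]. field_simplify; lra.
Qed.

Lemma lam_rep (n j : nat) (x : R) : (1 <= n)%nat -> (1 <= j <= n + 2)%nat ->
  (forall z, 0 < z -> INR n * (1 + 1 / INR n) ^ (n + 1) <= Defs.f n z) ->
  1 / INR n < x ->
  exists t y, 1 < t /\ 0 < y /\ y * t * (t ^ n - 1) = t - 1 /\ y <= 1 / INR n /\
    lambda_nj n j x = t ^ (n + 2 - j) * y.
Proof.
  intros Hn Hj Hmin Hx.
  assert (Hn0 : 0 < INR n) by (apply lt_0_INR; lia).
  assert (Hx0 : 0 < x) by (assert (0 < 1 / INR n) by (apply Rdiv_lt_0_compat; lra); lra).
  destruct (exist_mu n x Hn Hx (Hmin x Hx0)) as [y [Hy Hf]].
  assert (Hmu := mu_eq n x y Hn Hy Hf).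
  destruct (pair n y x) as (H1 & H2 & H3); [lra|lra|auto|].
  set (t := (1 + x) / (1 + y)) in *.
  exists t, y. split; [auto|split; [lra|split; [|split; [lra|]]]].
  - assert (t ^ (n + 1) = t * t ^ n) by (rewrite Nat.add_1_r; simpl; ring). nra.
  - apply lam_eq; auto; lra.
Qed.

Lemma pos_case (n : nat) (t y : R) : (1 <= n)%nat -> 1 < t -> 0 < y ->
  y * t * (t ^ n - 1) = t - 1 -> 1 <= INR n * t ^ n * y.
Proof.
  intros Hn Ht Hy Hid. destruct n as [|m]; [lia|].
  assert (HB := lemB t m (Rlt_le _ _ Ht)).
  set (Q := t ^ m) in *.
  assert (HP : t ^ S m = t * Q) by (unfold Q; simpl; ring).
  rewrite HP in *.
  assert (HQ : 1 <= Q) by (unfold Q; apply pow_R1_Rle; lra).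
  assert (HP0 : 0 < t * Q - 1) by nra.
  apply (Rmult_le_reg_r (t * Q - 1)); [lra|].
  replace (INR (S m) * (t * Q) * y * (t * Q - 1)) with (INR (S m) * Q * (y * t * (t * Q - 1))) by ring.
  rewrite Hid. nra.
Qed.

Lemma div_helper (c P z : R) : 0 < z -> c * z <= P -> c <= P / z.
Proof.
  intros Hz H. apply (Rmult_le_reg_r z); [lra|].
  unfold Rdiv. rewrite Rmult_assoc, Rinv_l; lra.
Qed.

Lemma hmin (n : nat) : (1 <= n <= 3)%nat ->
  forall z, 0 < z -> INR n * (1 + 1 / INR n) ^ (n + 1) <= Defs.f n z.
Proof.
  intros Hn z Hz. unfold Defs.f. apply div_helper; auto.
  assert (Hc : (n = 1 \/ n = 2 \/ n = 3)%nat) by lia; destruct Hc as [Hc|[Hc|Hc]]; subst n; simpl.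
  - assert (0 <= (z - 1) * (z - 1)) by (apply Rle_0_sqr). field_simplify. nra.
  - assert (0 <= (z - 1/2) * (z - 1/2) * (z + 4)) by (apply Rmult_le_pos; [apply Rle_0_sqr|lra]).
    field_simplify. nra.
  - assert (0 <= (z - 1/3) * (z - 1/3) * (z * z + 14/3 * z + 9)) by (apply Rmult_le_pos; [apply Rle_0_sqr|nra]).
    field_simplify. nra.
Qed.

Lemma neg_case (n j : nat) (t y : R) : (1 <= n <= 3)%nat -> (3 <= j <= n + 2)%nat ->
  1 < t -> 0 < y -> y <= 1 / INR n ->
  y * t * (t ^ n - 1) = t - 1 -> t ^ (n + 2 - j) * y <= 1 / INR n.
Proof.
  intros Hn Hj Ht Hy Hyn Hid.
  assert (Hle : t ^ (n + 2 - j) <= t ^ (n - 1)) by (apply Rle_pow; [lra|lia]).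
  apply Rle_trans with (t ^ (n - 1) * y); [nra|].
  assert (Hc : (n = 1 \/ n = 2 \/ n = 3)%nat) by lia; destruct Hc as [Hc|[Hc|Hc]]; subst n; simpl in *.
  - lra.
  - assert (Hk : y * t * (t + 1) = 1).
    { apply (Rmult_eq_reg_r (t - 1)); [|lra]. nra. }
    field_simplify. nra.
  - assert (Hk : y * t * (t * t + t + 1) = 1).
    { apply (Rmult_eq_reg_r (t - 1)); [|lra]. nra. }
    field_simplify. nra.
Qed.

Lemma w_pos (k : nat) (y : R) : (1 <= k)%nat ->
  y * ((3/2) ^ (k + 3 + 1) - 3/2) = 3/2 - 1 -> 1 / INR (k + 3) < (3/2) ^ (k + 3 + 2 - 3) * y.
Proof.
  intros Hk Hid.
  assert (HB := lemB (3/2) k ltac:(lra)).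
  set (Q := (3/2) ^ k) in *.
  assert (HQ : 1 <= Q) by (unfold Q; apply pow_R1_Rle; lra).
  replace ((3/2) ^ S k) with (3/2 * Q) in HB by (unfold Q; simpl; ring).
  replace ((3/2) ^ (k + 3 + 1)) with ((3/2)^4 * Q) in Hid by (unfold Q; rewrite <- pow_add; f_equal; lia).
  replace ((3/2) ^ (k + 3 + 2 - 3)) with ((3/2)^2 * Q) by (unfold Q; rewrite <- pow_add; f_equal; lia).
  rewrite plus_INR in *. rewrite S_INR in HB. simpl (INR 3).
  assert (HK : 1 <= INR k) by (apply (le_INR 1); lia).
  assert (Hy2 : y * ((3/2)^3 * Q - 1) = 1/3).
  { apply (Rmult_eq_reg_l (3/2)); [|lra]. simpl in *. lra. }
  assert (HD : 0 < (3/2)^3 * Q - 1) by (simpl; lra).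
  apply (Rmult_lt_reg_r ((INR k + (1 + 1 + 1)) * ((3/2)^3 * Q - 1))); [nra|].
  replace (1 / (INR k + (1 + 1 + 1)) * ((INR k + (1 + 1 + 1)) * ((3 / 2) ^ 3 * Q - 1)))
    with ((3/2)^3 * Q - 1) by (field; lra).
  replace ((3 / 2) ^ 2 * Q * y * ((INR k + (1 + 1 + 1)) * ((3 / 2) ^ 3 * Q - 1)))
    with ((3 / 2) ^ 2 * Q * (INR k + (1 + 1 + 1)) * (y * ((3 / 2) ^ 3 * Q - 1))) by ring.
  rewrite Hy2. simpl. nra.
Qed.

Lemma w_neg (k : nat) (y : R) : (2 <= k)%nat ->
  let s := INR (k + 2) + 1 in
  y * (s ^ (k + 2 + 1) - s) = s - 1 -> (s ^ (k + 2 + 2 - 3) * y) < 1 / INR (k + 2).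
Proof.
  intros Hk s Hid.
  assert (Hn : 0 < INR (k + 2)) by (apply lt_0_INR; lia).
  set (N := INR (k + 2)) in *.
  assert (Hs : 1 < s) by (unfold s; lra).
  set (R0 := s ^ k).
  assert (HR : 1 <= R0) by (unfold R0; apply pow_R1_Rle; lra).
  replace (s ^ (k + 2 + 1)) with (s^3 * R0) in Hid by (unfold R0; rewrite <- pow_add; f_equal; lia).
  replace (s ^ (k + 2 + 2 - 3)) with (s * R0) by (unfold R0; rewrite <- (pow_1 s) at 1; rewrite <- pow_add; f_equal; lia).
  assert (Hy2 : y * s * (s^2 * R0 - 1) = N) by (simpl in *; unfold s in *; lra).
  assert (HD : 0 < s^2 * R0 - 1) by (simpl; nra).
  apply (Rmult_lt_reg_r (N * (s^2 * R0 - 1))); [nra|].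
  replace (1 / N * (N * (s^2 * R0 - 1))) with (s^2 * R0 - 1) by (field; lra).
  replace (s * R0 * y * (N * (s ^ 2 * R0 - 1))) with (N * R0 * (y * s * (s ^ 2 * R0 - 1))) by ring.
  rewrite Hy2. unfold s. simpl. nra.
Qed.

Theorem corollary2p6 (n : nat) (hn : (1 <= n)%nat) :
  (n <= 3)%nat <->
  (forall j : nat, (1 <= j <= n + 2)%nat ->
     no_sign_change_on_ray (fun lam => lambda_nj n j lam - 1 / INR n) (1 / INR n)).
Proof.
  assert (Hn0 : 0 < INR n) by (apply lt_0_INR; lia).
  split.
  - intros Hn3 j Hj [x1 [x2 [Hx1 [Hx2 [Hneg Hpos]]]]].
    assert (Hmin := hmin n (conj hn Hn3)).
    destruct (Compare_dec.le_lt_dec j 2) as [Hj2|Hj2].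
    + destruct (lam_rep n j x1 hn Hj Hmin Hx1) as (t & y & Ht & Hy & Hid & Hyn & Hl).
      simpl in Hneg. rewrite Hl in Hneg.
      assert (Hp := pos_case n t y hn Ht Hy Hid).
      assert (Hle : t ^ n <= t ^ (n + 2 - j)) by (apply Rle_pow; [lra|lia]).
      assert (1 / INR n <= t ^ n * y).
      { apply (Rmult_le_reg_l (INR n)); [lra|].
        replace (INR n * (1 / INR n)) with 1 by (field; lra). lra. }
      nra.
    + destruct (lam_rep n j x2 hn Hj Hmin Hx2) as (t & y & Ht & Hy & Hid & Hyn & Hl).
      simpl in Hpos. rewrite Hl in Hpos.
      assert (Hq := neg_case n j t y (conj hn Hn3) ltac:(lia) Ht Hy Hyn Hid). lra.
  - intros H. destruct (Compare_dec.le_lt_dec n 3) as [Hle|Hlt]; [exact Hle|].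
    exfalso.
    apply (H 3%nat ltac:(lia)).
    destruct (param n (INR n + 1) hn ltac:(lra)) as (Hy2 & Hx2 & Hmu2).
    destruct (param n (3/2) hn ltac:(lra)) as (Hy1 & Hx1 & Hmu1).
    set (y2 := (INR n + 1 - 1) / ((INR n + 1) ^ (n + 1) - (INR n + 1))) in *.
    set (y1 := (3/2 - 1) / ((3/2) ^ (n + 1) - 3/2)) in *.
    exists ((INR n + 1) ^ (n + 1) * y2), ((3/2) ^ (n + 1) * y1).
    split; [exact Hx2|split; [exact Hx1|]].
    assert (HS2 : 0 < (INR n + 1) ^ (n + 1) - (INR n + 1)).
    { assert (1 < (INR n + 1) ^ n) by (apply Rlt_pow_R1; [lra|lia]).
      rewrite Nat.add_1_r. simpl. nra. }
    assert (HS1 : 0 < (3/2) ^ (n + 1) - 3/2).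
    { assert (1 < (3/2) ^ n) by (apply Rlt_pow_R1; [lra|lia]).
      rewrite Nat.add_1_r. simpl. nra. }
    assert (Hid2 : y2 * ((INR n + 1) ^ (n + 1) - (INR n + 1)) = INR n + 1 - 1) by (unfold y2; field; lra).
    assert (Hid1 : y1 * ((3/2) ^ (n + 1) - 3/2) = 3/2 - 1) by (unfold y1; field; lra).
    clearbody y1 y2.
    simpl.
    rewrite (lam_eq n 3 _ y2 (INR n + 1)) by (auto; lia || lra).
    rewrite (lam_eq n 3 _ y1 (3/2)) by (auto; lia || lra).
    destruct n as [|[|[|[|k]]]]; try lia.
    replace (S (S (S (S k)))) with (k + 1 + 3)%nat by lia.
    replace (S (S (S (S k)))) with (k + 1 + 3)%nat in * by lia.
    split.
    + assert (Hw := w_neg (k + 2) y2 ltac:(lia)).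
      replace (k + 2 + 2)%nat with (k + 1 + 3)%nat in Hw by lia.
      specialize (Hw Hid2). lra.
    + assert (Hw := w_pos (k + 1) y1 ltac:(lia)).
      specialize (Hw Hid1). lra.
Qed.
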